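(* Let $L=\langle S,A,\to\rangle$ be a labelled transition system. For all $x,y,z\in\{o,b\}$ and all $s,t\in S$: $s\le_{(z,x)}t$ if and only if $s\le_{(z,y)}t$.
   Context: An LTS is $\langle S,A,\to\rangle$ with states $S$, actions $A$ containing the internal action $\tau$, and $\to\subseteq S\times A\times S$; write $s\xrightarrow{a}t$, and $\twoheadrightarrow$ for the reflexive-transitive closure of $\xrightarrow{\tau}$. For $R\subseteq S\times S$ and $s,s',t$: $s\twoheadrightarrow_{o,R,t}s'$ iff $s\twoheadrightarrow s'$; $s\twoheadrightarrow_{b,R,t}s'$ iff $s\twoheadrightarrow s'$, $t\,R\,s$ and $t\,R\,s'$. For $x,y\in\{o,b\}$, a (not necessarily symmetric) relation $R\subseteq S\times S$ is an $(x,y)$-generic simulation if whenever $s\,R\,t$ and $s\xrightarrow{a}s'$, either $a=\tau$ and $s'\,R\,t$, or there exist $t',t_1,t_2$ with $t\twoheadrightarrow_{x,R,s}t_1\xrightarrow{a}t_2\twoheadrightarrow_{y,R,s'}t'$ and $s'\,R\,t'$. Write $s\le_{(x,y)}t$ iff there is an $(x,y)$-generic simulation $R$ with $s\,R\,t$. *)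

(* Defs.v *)
From Stdlib Require Import Relations.

Record LTS := {
  lts_state : Type;
  lts_act : Type;
  lts_tau : lts_act;
  lts_step : lts_state -> lts_act -> lts_state -> Prop
}.

Inductive mode := o | b.

Section Generic.
Variable L : LTS.
Notation S := (lts_state L).
Notation A := (lts_act L).
Notation tau := (lts_tau L).
Notation step := (lts_step L).

Definition tau_steps : S -> S -> Prop :=
  clos_refl_trans S (fun s s' => step s tau s').

Definition mode_steps (x : mode) (R : S -> S -> Prop) (t s s' : S) : Prop :=
  match x with
  | o => tau_steps s s'
  | b => tau_steps s s' /\ R t s /\ R t s'
  end.

Definition generic_simulation (x y : mode) (R : S -> S -> Prop) : Prop :=
  forall s t s' (a : A), R s t -> step s a s' ->
    (a = tau /\ R s' t) \/
    (exists t' t1 t2,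
        mode_steps x R s t t1 /\ step t1 a t2 /\ mode_steps y R s' t2 t' /\
        R s' t').

Definition gen_sim_le (x y : mode) (s t : S) : Prop :=
  exists R, generic_simulation x y R /\ R s t.

End Generic.

(* Main.v *)
Require Import Defs.
From Stdlib Require Import Relations.

Lemma b_to_o (L : LTS) (z : mode) (s t : lts_state L) :
  gen_sim_le L z b s t -> gen_sim_le L z o s t.
Proof.
  intros [R [HR Hst]]. exists R; split; auto.
  intros s0 t0 s' a H0 Hs. destruct (HR s0 t0 s' a H0 Hs) as [H|[t' [t1 [t2 [H1 [H2 [H3 H4]]]]]]].
  - left; auto.
  - right. exists t', t1, t2. simpl in H3. destruct H3. auto.
Qed.

Lemma o_to_b (L : LTS) (z : mode) (s t : lts_state L) :
  gen_sim_le L z o s t -> gen_sim_le L z b s t.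
Proof.
  intros [R [HR Hst]].
  exists (fun p u => exists t', tau_steps L u t' /\ R p t'). split.
  2:{ exists t; split; [apply rt_refl|auto]. }
  intros s0 u s' a [t' [Hu H0]] Hs.
  destruct (HR s0 t' s' a H0 Hs) as [[Ha H]|[t'' [t1 [t2 [H1 [H2 [H3 H4]]]]]]].
  - left. split; auto. exists t'; auto.
  - right. exists t'', t1, t2. simpl in H3. split; [|split; [auto|split]].
    + destruct z; simpl in *.
      * eapply rt_trans; eauto.
      * destruct H1 as [H1 [H5 H6]]. split; [eapply rt_trans; eauto|split].
        -- exists t'; auto.
        -- exists t1; split; [apply rt_refl|auto].
    + simpl. split; auto. split.
      * exists t''; auto.
      * exists t''; split; [apply rt_refl|auto].
    + exists t''; split; [apply rt_refl|auto].
Qed.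

Theorem proposition6p13 (L : LTS) (x y z : mode) (s t : lts_state L) :
  gen_sim_le L z x s t <-> gen_sim_le L z y s t.
Proof.
  destruct x, y; split; intro H; auto;
    first [apply o_to_b; exact H | apply b_to_o; exact H].
Qed.
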